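(* Let $G=(V,E)$ be a finite, simple, undirected, connected graph with no isolated vertices, and suppose $G$ has at least one split independent set. Then every maximal split independent set $S$ of $G$ is a minimal split dominating set of $G$.
   Context: For $X\subseteq V$, $\langle X\rangle$ denotes the induced subgraph on $X$. A set $D\subseteq V$ is dominating if every vertex of $V\setminus D$ has a neighbor in $D$. A dominating set $S$ is a split dominating set if $\langle V\setminus S\rangle$ is disconnected or a $K_1$. A split dominating set $S$ is a minimal split dominating set if for every $u\in S$ the set $S\setminus\{u\}$ is not a split dominating set (i.e. either $S\setminus\{u\}$ is not dominating, or $\langle (V\setminus S)\cup\{u\}\rangle$ is connected). A set $S$ is a split independent set if $S$ is independent and $\langle V\setminus S\rangle$ is disconnected or a $K_1$. A split independent set $S$ is a maximal split independent set if for every $v\in V\setminus S$, either $S\cup\{v\}$ is not independent, or $\langle V\setminus (S\cup\{v\})\rangle$ is connected. *)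

(* Defs.v *)
(* A finite simple graph is a symmetric irreflexive
   relation e on a finType T (vertex set V = T). *)
From mathcomp Require Import all_boot.
Set Implicit Arguments. Unset Strict Implicit. Unset Printing Implicit Defensive.

Section Graphs.
Variable T : finType.
Variable e : rel T.

Definition simple_graph := symmetric e /\ irreflexive e.
Definition graph_connected := forall x y : T, connect e x y.
Definition no_isolated := forall x : T, exists y, e x y.

Definition induced_rel (X : {set T}) : rel T :=
  [rel x y | [&& x \in X, y \in X & e x y]].

Definition induced_disconnected (X : {set T}) :=
  exists x y, [/\ x \in X, y \in X & ~~ connect (induced_rel X) x y].

Definition disc_or_K1 (X : {set T}) := induced_disconnected X \/ #|X| = 1.

Definition dominating (D : {set T}) :=
  forall v, v \in ~: D -> exists2 u, u \in D & e v u.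

Definition independent (S : {set T}) :=
  forall x y, x \in S -> y \in S -> ~~ e x y.

Definition split_dominating (S : {set T}) := dominating S /\ disc_or_K1 (~: S).

Definition minimal_split_dominating (S : {set T}) :=
  split_dominating S /\ forall u, u \in S -> ~ split_dominating (S :\ u).

Definition split_independent (S : {set T}) := independent S /\ disc_or_K1 (~: S).

Definition maximal_split_independent (S : {set T}) :=
  split_independent S /\ forall v, v \in ~: S -> ~ split_independent (v |: S).

End Graphs.

(* Main.v *)
Require Import Defs.
From mathcomp Require Import all_boot.

Lemma dom_lemma (T : finType) (e : rel T) (S : {set T}) (v w : T) :
  simple_graph e -> e v w -> w \notin S -> v \notin S ->
  disc_or_K1 e (~: S) -> disc_or_K1 e (~: (v |: S)).
Proof.
move=> [esym eirr] evw wS vS [[x [y [xX yX nc]]]|h1].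
- have wv : w != v by apply/eqP=> E; move: evw; rewrite E eirr.
  set X := ~: S.
  have sub : subrel (induced_rel e (~: (v |: S))) (connect (induced_rel e X)).
    move=> a b /= /and3P[aY bY eab]; apply: connect1.
    move: aY bY; rewrite ?inE ?negb_or => /andP[_ aS] /andP[_ bS].
    by rewrite /induced_rel /X /= !inE aS bS eab.
  have vX : v \in X by rewrite inE.
  have wX : w \in X by rewrite inE.
  pose x' := if x == v then w else x.
  pose y' := if y == v then w else y.
  have x'Y : x' \in ~: (v |: S).
    rewrite /x'; case: eqP => [_|/eqP xv].
      by rewrite !inE negb_or wv wS.
    by move: xX; rewrite !inE negb_or xv.
  have y'Y : y' \in ~: (v |: S).
    rewrite /y'; case: eqP => [_|/eqP yv].
      by rewrite !inE negb_or wv wS.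
    by move: yX; rewrite !inE negb_or yv.
  left; exists x', y'; split => //; apply/negP => c.
  move/negP: nc; apply.
  have c1 : connect (induced_rel e X) x x'.
    rewrite /x'; case: eqP => [->|_]; last exact: connect0.
    by apply: connect1; rewrite /induced_rel /= vX wX evw.
  have c2 : connect (induced_rel e X) y' y.
    rewrite /y'; case: eqP => [->|_]; last exact: connect0.
    by apply: connect1; rewrite /induced_rel /= vX wX esym evw.
  apply: connect_trans c1 _; apply: connect_trans _ c2.
  exact: (connect_sub sub c).
- exfalso.
  have vX : v \in ~: S by rewrite inE.
  have wX : w \in ~: S by rewrite inE.
  have wv : w != v by apply/eqP=> E; move: evw; rewrite E eirr.
  have : #|[set v; w]| <= #|~: S|.
    by apply: subset_leq_card; apply/subsetP => z; rewrite !inE => /orP[] /eqP ->.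
  by rewrite h1 cards2 eq_sym wv.
Qed.

Theorem mainTheorem2 (T : finType) (e : rel T) :
  simple_graph e -> graph_connected e -> no_isolated e ->
  (exists S : {set T}, split_independent e S) ->
  forall S : {set T}, maximal_split_independent e S -> minimal_split_dominating e S.
Proof.
move=> [esym eirr] _ noiso _ S [[indS dS] maxS].
split.
- split => //.
  move=> v vS.
  case: (boolP [exists u, (u \in S) && e v u]).
    by move/existsP=> [u /andP[uS evu]]; exists u.
  move=> /existsPn nex; exfalso.
  apply: (maxS v vS); split.
  + move=> x y; rewrite !inE => /orP[/eqP->|xS] /orP[/eqP->|yS].
    * by rewrite eirr.
    * by have := nex y; rewrite yS.
    * by have := nex x; rewrite xS esym.
    * exact: indS.
  + have [w evw] := noiso v.
    have wS : w \notin S by have := nex w; rewrite evw andbT.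
    move: vS; rewrite inE => vS.
    exact: (@dom_lemma T e S v w (conj esym eirr) evw wS vS dS).
- move=> u uS [dom _].
  have uX : u \in ~: (S :\ u) by rewrite !inE eqxx.
  have [z zS euz] := dom u uX.
  move: zS; rewrite !inE => /andP[_ zS].
  by have := indS u z uS zS; rewrite euz.
Qed.
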